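(* Let $\boldsymbol{y}_1,\boldsymbol{y}_2,\boldsymbol{\lambda}_1,\boldsymbol{\lambda}_2\in\mathbb{R}^p$, where $\{\lambda_{1,i}\}_{1\le i\le p}$ and $\{\lambda_{2,i}\}_{1\le i\le p}$ are non-negative non-decreasing sequences. Then \[ \|\mathrm{Prox}_{\boldsymbol{\lambda}_1}(\boldsymbol{y}_1)-\mathrm{Prox}_{\boldsymbol{\lambda}_2}(\boldsymbol{y}_2)\|_2\le2\big(\|\boldsymbol{\lambda}_1-\boldsymbol{\lambda}_2\|_2+\|\boldsymbol{y}_1-\boldsymbol{y}_2\|_2\big). \]
   Context: For $\boldsymbol y\in\mathbb{R}^p$ and $0\le\lambda_1\le\cdots\le\lambda_p$, $\mathrm{Prox}_{\boldsymbol{\lambda}}(\boldsymbol{y})=\arg\min_{\boldsymbol{x}\in\mathbb{R}^p}\frac12\|\boldsymbol{y}-\boldsymbol{x}\|_2^2+\sum_{i=1}^p\lambda_i|x|_{(i)}$, where $|x|_{(1)}\le\cdots\le|x|_{(p)}$ is the increasing rearrangement of $|x_1|,\dots,|x_p|$. *)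

(* Defs.v *)
From mathcomp Require Import all_boot all_order all_algebra.
From mathcomp Require Import reals.
Set Implicit Arguments. Unset Strict Implicit. Unset Printing Implicit Defensive.
Import Order.TTheory GRing.Theory Num.Theory.
Local Open Scope ring_scope.

Definition norm2 (R : realType) (p : nat) (v : 'rV[R]_p) : R :=
  Num.sqrt (\sum_(i < p) v 0 i ^+ 2).

(* |x|_(1) <= ... <= |x|_(p): increasing rearrangement of |x_1|,...,|x_p|,
   as a sequence indexed from 0. *)
Definition abs_sorted (R : realType) (p : nat) (x : 'rV[R]_p) : seq R :=
  sort <=%R [seq `|x 0 i| | i <- enum 'I_p].

Definition sl1 (R : realType) (p : nat) (lam x : 'rV[R]_p) : R :=
  \sum_(i < p) lam 0 i * nth 0 (abs_sorted x) i.

Definition prox_obj (R : realType) (p : nat) (lam y x : 'rV[R]_p) : R :=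
  2^-1 * norm2 (y - x) ^+ 2 + sl1 lam x.

(* x = Prox_lambda(y): x is a minimizer of the objective (the minimizer
   exists and is unique by strong convexity). *)
Definition is_prox (R : realType) (p : nat) (lam y x : 'rV[R]_p) : Prop :=
  forall z : 'rV[R]_p, prox_obj lam y x <= prox_obj lam y z.

Definition admissible_lambda (R : realType) (p : nat) (lam : 'rV[R]_p) : Prop :=
  (forall i : 'I_p, 0 <= lam 0 i) /\
  (forall i j : 'I_p, (i <= j)%N -> lam 0 i <= lam 0 j).

(* Main.v *)
Require Import Defs.
From mathcomp Require Import all_boot all_order all_algebra.
From mathcomp Require Import reals ring lra zify.
Import Order.TTheory GRing.Theory Num.Theory.
Local Open Scope ring_scope.

Fixpoint dot {R : realType} (a b : seq R) : R :=
  match a, b with x :: a', y :: b' => x * y + dot a' b' | _, _ => 0 end.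

Lemma dot_cat {R : realType} (a1 a2 b1 b2 : seq R) :
  size a1 = size b1 -> dot (a1 ++ a2) (b1 ++ b2) = dot a1 b1 + dot a2 b2.
Proof.
elim: a1 b1 => [|x a1 IH] [|y b1] //=; first by rewrite add0r.
by move=> [] /IH ->; rewrite addrA.
Qed.

Lemma dot_swap {R : realType} (a0 : R) (a b1 b2 : seq R) c m :
  size a = (size b1 + (size b2).+1)%N -> all (fun v => a0 <= v) a -> m <= c ->
  a0 * c + dot a (b1 ++ m :: b2) <= a0 * m + dot a (b1 ++ c :: b2).
Proof.
move=> Hs Ha Hmc.
rewrite -(cat_take_drop (size b1) a) in Ha *.
have Ht : size (take (size b1) a) = size b1 by rewrite size_takel // Hs leq_addr.
case E: (drop (size b1) a) => [|ak a3].
  by move: (f_equal size E); rewrite size_drop Hs /=; lia.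
rewrite !dot_cat //= .
rewrite E all_cat /= in Ha. move/and3P: Ha => [_ Hak _].
have H := mulr_ge0 (etrans (subr_ge0 a0 ak) Hak) (etrans (subr_ge0 m c) Hmc).
nra.
Qed.

Lemma rearr {R : realType} n (a b : seq R) : size a = n -> size b = n ->
  sorted <=%R a -> dot a b <= dot a (sort <=%R b).
Proof.
elim: n a b => [|n IH] [|a0 a] b //=.
move=> [Ha] Hb Hsa.
case Hs: (sort <=%R b) => [|m t].
  by move: (f_equal size Hs); rewrite size_sort Hb.
have mb : m \in b by rewrite -(mem_sort <=%R) Hs mem_head.
have Hst : sorted <=%R (m :: t) by rewrite -Hs; apply: sort_sorted; exact: le_total.
have mmin : forall x, x \in b -> m <= x.
  move=> x; rewrite -(mem_sort <=%R) Hs inE => /orP [/eqP -> //|xt].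
  by have /allP := order_path_min le_trans Hst; apply.
have Hsa' : sorted <=%R a := path_sorted Hsa.
have Hamin : all (fun v => a0 <= v) a := order_path_min le_trans Hsa.
suff [b'' [Hp Hle]] : exists b'', perm_eq b (m :: b'') /\ dot (a0 :: a) b <= a0 * m + dot a b''.
  have Hsz : size b'' = n by move: (perm_size Hp); rewrite Hb /=; lia.
  have -> : t = sort <=%R b''.
    apply: (sorted_eq le_trans le_anti (path_sorted Hst)).
      by apply: sort_sorted; exact: le_total.
    rewrite perm_sym (perm_trans (permEl (perm_sort _ _))) //.
    by rewrite -(perm_cons m) -Hs perm_sym (perm_trans (permEl (perm_sort _ _))) // perm_sym.
  apply: (le_trans Hle) => /=; rewrite lerD2l; exact: IH.
case: (splitPr mb) Hb mmin => b1 b2 Hb mmin.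
case: b1 Hb mmin => [|c b1] Hb mmin.
  by exists b2; split => //=; rewrite lexx.
exists (b1 ++ c :: b2); split.
  apply/permP => P /=; rewrite !count_cat /=; lia.
rewrite /=; apply: dot_swap => //.
  by move: Hb Ha; rewrite /= size_cat /=; lia.
by apply: mmin; rewrite mem_head.
Qed.

Definition absx {R : realType} {p} (x : 'rV[R]_p) := fun i : 'I_p => `|x 0 i|.
Definition SS {R : realType} {p} (x : 'rV[R]_p) := sort (relpre (absx x) <=%R) (enum 'I_p).
Definition lseq {R : realType} {p} (lam : 'rV[R]_p) := [seq lam 0 i | i <- enum 'I_p].

Lemma abs_sortedE {R : realType} {p} (x : 'rV[R]_p) : abs_sorted x = map (absx x) (SS x).
Proof. by rewrite /abs_sorted sort_map. Qed.

Lemma SS_perm {R : realType} {p} (x : 'rV[R]_p) : perm_eq (SS x) (enum 'I_p).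
Proof. exact: permEl (perm_sort _ _). Qed.

Lemma sum_perm {R : realType} {p} (S : seq 'I_p) (F : 'I_p -> R) :
  perm_eq S (enum 'I_p) -> \sum_(i <- S) F i = \sum_i F i.
Proof. by move=> H; rewrite (perm_big _ H) big_enum. Qed.

Lemma abs_sorted_perm {R : realType} {p} (x : 'rV[R]_p) S :
  perm_eq S (enum 'I_p) -> abs_sorted x = sort <=%R (map (absx x) S).
Proof.
move=> H; rewrite /abs_sorted; apply/perm_sortP.
- exact: le_total.
- exact: le_trans.
- exact: le_anti.
by rewrite perm_sym; apply: perm_map.
Qed.

Lemma dot_sum {R : realType} n (a b : seq R) : size a = n -> size b = n ->
  dot a b = \sum_(i < n) a`_i * b`_i.
Proof.
elim: n a b => [|n IH] [|x a] [|y b] //=; first by rewrite big_ord0.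
move=> [Ha] [Hb]; rewrite big_ord_recl /= (IH a b) //.
Qed.

Lemma dot_map {R : realType} {I : Type} (S : seq I) (f g : I -> R) :
  dot (map f S) (map g S) = \sum_(i <- S) f i * g i.
Proof. by elim: S => [|i S IH] /=; rewrite ?big_nil ?big_cons ?IH. Qed.

Lemma size_lseq {R : realType} {p} (lam : 'rV[R]_p) : size (lseq lam) = p.
Proof. by rewrite size_map size_enum_ord. Qed.

Lemma sl1E {R : realType} {p} (lam x : 'rV[R]_p) : sl1 lam x = dot (lseq lam) (abs_sorted x).
Proof.
rewrite (dot_sum p) ?size_lseq ?size_sort ?size_map ?size_enum_ord //.
apply: eq_bigr => i _; rewrite (nth_map i) ?size_enum_ord // nth_ord_enum //.
by rewrite -enumT size_enum_ord.
Qed.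

Lemma lseq_sorted {R : realType} {p} (lam : 'rV[R]_p) : admissible_lambda lam -> sorted <=%R (lseq lam).
Proof.
move=> [_ Hm]; rewrite sorted_map.
apply: (@sub_sorted _ (relpre val ltn)).
  by move=> i j /= /ltnW; apply: Hm.
by rewrite -sorted_map val_enum_ord iota_ltn_sorted.
Qed.

Lemma lseq_ge0 {R : realType} {p} (lam : 'rV[R]_p) : admissible_lambda lam -> all (fun v => 0 <= v) (lseq lam).
Proof. by move=> [H _]; apply/allP => v /mapP [i _ ->]. Qed.

Lemma dot_mono {R : realType} {I : Type} (a : seq R) (S : seq I) f g :
  all (fun v => 0 <= v) a -> (forall i, f i <= g i) -> dot a (map f S) <= dot a (map g S).
Proof.
move=> + H; elim: S a => [|i S IH] [|x a] //= /andP [Hx Ha].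
by apply: lerD; [apply: ler_wpM2l | apply: IH].
Qed.

Lemma dot_lin {R : realType} {I : Type} (a : seq R) (S : seq I) f g u v :
  dot a (map (fun i => u * f i + v * g i) S) = u * dot a (map f S) + v * dot a (map g S).
Proof.
elim: S a => [|i S IH] [|x a] //=; rewrite ?mulr0 ?addr0 //.
rewrite IH; ring.
Qed.

Lemma sl1_convex {R : realType} {p} (lam x z w : 'rV[R]_p) t :
  admissible_lambda lam -> 0 <= t -> t <= 1 ->
  (forall i, `|w 0 i| <= (1 - t) * `|x 0 i| + t * `|z 0 i|) ->
  sl1 lam w <= (1 - t) * sl1 lam x + t * sl1 lam z.
Proof.
move=> Hl Ht0 Ht1 Hw; rewrite !sl1E [abs_sorted w]abs_sortedE.
apply: le_trans (@dot_mono R _ (lseq lam) (SS w) (absx w)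
   (fun i => (1 - t) * absx x i + t * absx z i) (lseq_ge0 lam Hl) Hw) _.
rewrite dot_lin; apply: lerD; apply: ler_wpM2l; rewrite ?subr_ge0 //;
 rewrite (abs_sorted_perm _ _ (SS_perm w)); apply: (rearr p);
 rewrite ?size_lseq ?size_map ?(perm_size (SS_perm w)) ?size_enum_ord //;
 exact: lseq_sorted.
Qed.

Lemma norm2_sq {R : realType} {p} (v : 'rV[R]_p) : norm2 v ^+ 2 = \sum_i v 0 i ^+ 2.
Proof. by rewrite /norm2 sqr_sqrtr // sumr_ge0 // => i _; exact: sqr_ge0. Qed.

Lemma var_ineq {R : realType} {p} (lam y x z : 'rV[R]_p) :
  admissible_lambda lam -> is_prox lam y x ->
  \sum_i (y 0 i - x 0 i) * (z 0 i - x 0 i) <= sl1 lam z - sl1 lam x.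
Proof.
move=> Hl Hp.
set P := \sum_i _.
set U := \sum_i (y 0 i - x 0 i) ^+ 2.
set N := \sum_i (z 0 i - x 0 i) ^+ 2.
have N0 : 0 <= N by apply: sumr_ge0 => i _; exact: sqr_ge0.
rewrite leNgt; apply/negP => HA.
set A := P - (sl1 lam z - sl1 lam x).
have A0 : 0 < A by rewrite subr_gt0.
have D0 : 0 < A + N + 1 by lra.
set t := A / (A + N + 1).
have t0 : 0 < t by apply: divr_gt0.
have tA : t * (A + N + 1) = A by rewrite /t divfK // gt_eqF.
have t1 : t <= 1 by rewrite /t ler_pdivrMr // mul1r; lra.
clearbody t.
set w : 'rV[R]_p := \row_j ((1 - t) * x 0 j + t * z 0 j).
have := Hp w; rewrite /prox_obj !norm2_sq.
have -> : \sum_i (y - w) 0 i ^+ 2 = U - 2 * t * P + t ^+ 2 * N.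
  have -> : U - 2 * t * P + t ^+ 2 * N = \sum_i ((y 0 i - x 0 i) ^+ 2
      - 2 * t * ((y 0 i - x 0 i) * (z 0 i - x 0 i)) + t ^+ 2 * (z 0 i - x 0 i) ^+ 2).
    by rewrite big_split sumrB /= !mulr_sumr.
  by apply: eq_bigr => i _; rewrite !mxE; ring.
have -> : \sum_i (y - x) 0 i ^+ 2 = U by apply: eq_bigr => i _; rewrite !mxE.
have Hc : sl1 lam w <= (1 - t) * sl1 lam x + t * sl1 lam z.
  apply: sl1_convex => //; [exact: ltW | move=> i; rewrite mxE].
  apply: le_trans (ler_normD _ _) _.
  by rewrite !normrM !(ger0_norm (ltW t0)) ger0_norm // subr_ge0.
move=> H.
have H2 : t * (A - t * N / 2) <= 0.
  have -> : t * (A - t * N / 2) = t * P - t * sl1 lam z + t * sl1 lam x - t ^+ 2 * N / 2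
    by rewrite /A; ring.
  lra.
have H3 : A <= t * N / 2.
  by rewrite -subr_le0; move: H2; rewrite pmulr_rle0.
have := mulr_gt0 t0 A0; have := mulr_ge0 (ltW t0) N0.
move: tA; rewrite !mulrDr mulr1 => tA.
lra.
Qed.

Lemma size_abs_sorted {R : realType} {p} (x : 'rV[R]_p) : size (abs_sorted x) = p.
Proof. by rewrite size_sort size_map ?size_enum_ord // -enumT size_enum_ord. Qed.

Lemma sort_nonexp {R : realType} {p} (x1 x2 : 'rV[R]_p) :
  \sum_(i < p) (nth 0 (abs_sorted x2) i - nth 0 (abs_sorted x1) i) ^+ 2
   <= \sum_i (x1 0 i - x2 0 i) ^+ 2.
Proof.
have E : \sum_(i < p) (nth 0 (abs_sorted x2) i - nth 0 (abs_sorted x1) i) ^+ 2 =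
   dot (abs_sorted x2) (abs_sorted x2) + dot (abs_sorted x1) (abs_sorted x1)
   - 2 * dot (abs_sorted x1) (abs_sorted x2).
  rewrite !(dot_sum p) ?size_abs_sorted // mulr_sumr -big_split -sumrB /=.
  by apply: eq_bigr => i _; ring.
have Es (x : 'rV[R]_p) : dot (abs_sorted x) (abs_sorted x) = \sum_i x 0 i ^+ 2.
  rewrite abs_sortedE dot_map (sum_perm _ _ (SS_perm x)); apply: eq_bigr => i _.
  by rewrite /absx -normrM -expr2 ger0_norm // sqr_ge0.
have Ec : \sum_i x1 0 i * x2 0 i <= dot (abs_sorted x1) (abs_sorted x2).
  rewrite [abs_sorted x2](abs_sorted_perm _ _ (SS_perm x1)).
  apply: le_trans (rearr p (abs_sorted x1) (map (absx x2) (SS x1)) _ _ _); last first.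
  - by apply: sort_sorted; exact: le_total.
  - by rewrite size_map (perm_size (SS_perm x1)) size_enum_ord.
  - exact: size_abs_sorted.
  rewrite abs_sortedE dot_map (sum_perm _ _ (SS_perm x1)).
  apply: ler_sum => i _; rewrite /absx -normrM; exact: ler_norm.
have Er : \sum_i (x1 0 i - x2 0 i) ^+ 2 =
   \sum_i x2 0 i ^+ 2 + \sum_i x1 0 i ^+ 2 - 2 * \sum_i x1 0 i * x2 0 i.
  rewrite mulr_sumr -big_split -sumrB /=.
  by apply: eq_bigr => i _; ring.
rewrite E Er !Es; lra.
Qed.

Theorem lemma19 (R : realType) (p : nat) (y1 y2 lam1 lam2 x1 x2 : 'rV[R]_p) :
  admissible_lambda lam1 -> admissible_lambda lam2 ->
  is_prox lam1 y1 x1 -> is_prox lam2 y2 x2 ->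
  norm2 (x1 - x2) <= 2 * (norm2 (lam1 - lam2) + norm2 (y1 - y2)).
Proof.
move=> Hl1 Hl2 Hp1 Hp2.
have V1 := var_ineq lam1 y1 x1 x2 Hl1 Hp1.
have V2 := var_ineq lam2 y2 x2 x1 Hl2 Hp2.
set D2 := \sum_i (x1 0 i - x2 0 i) ^+ 2.
set Y2 := \sum_i (y1 0 i - y2 0 i) ^+ 2.
set L2 := \sum_i (lam1 0 i - lam2 0 i) ^+ 2.
set S2 := \sum_(i < p) (nth 0 (abs_sorted x2) i - nth 0 (abs_sorted x1) i) ^+ 2.
set YD := \sum_i (y1 0 i - y2 0 i) * (x1 0 i - x2 0 i).
set LS := \sum_(i < p) (lam1 0 i - lam2 0 i) * (nth 0 (abs_sorted x2) i - nth 0 (abs_sorted x1) i).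
have H1 : \sum_i (y1 0 i - x1 0 i) * (x2 0 i - x1 0 i)
        + \sum_i (y2 0 i - x2 0 i) * (x1 0 i - x2 0 i) = D2 - YD.
  by rewrite -big_split -sumrB /=; apply: eq_bigr => i _; ring.
have H2 : sl1 lam1 x2 - sl1 lam2 x2 - sl1 lam1 x1 + sl1 lam2 x1 = LS.
  by rewrite /sl1 -!sumrB -big_split /=; apply: eq_bigr => i _; ring.
have H3 : YD <= Y2 + D2 / 4.
  rewrite /Y2 /D2 mulr_suml -big_split /=; apply: ler_sum => i _.
  have := sqr_ge0 (y1 0 i - y2 0 i - (x1 0 i - x2 0 i) / 2); nra.
have H4 : LS <= L2 + S2 / 4.
  rewrite /L2 /S2 mulr_suml -big_split /=; apply: ler_sum => i _.
  have := sqr_ge0 (lam1 0 i - lam2 0 i - (nth 0 (abs_sorted x2) i - nth 0 (abs_sorted x1) i) / 2); nra.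
have H5 : S2 <= D2 := sort_nonexp x1 x2.
have HD : D2 <= 2 * (Y2 + L2) by lra.
have eD : norm2 (x1 - x2) = Num.sqrt D2 by rewrite /norm2; congr Num.sqrt; apply: eq_bigr => i _; rewrite !mxE.
have eY : norm2 (y1 - y2) = Num.sqrt Y2 by rewrite /norm2; congr Num.sqrt; apply: eq_bigr => i _; rewrite !mxE.
have eL : norm2 (lam1 - lam2) = Num.sqrt L2 by rewrite /norm2; congr Num.sqrt; apply: eq_bigr => i _; rewrite !mxE.
have Y0 : 0 <= Y2 by apply: sumr_ge0 => i _; exact: sqr_ge0.
have L0 : 0 <= L2 by apply: sumr_ge0 => i _; exact: sqr_ge0.
rewrite eD eY eL.
have a0 := sqrtr_ge0 L2; have b0 := sqrtr_ge0 Y2.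
have ea := sqr_sqrtr L0; have eb := sqr_sqrtr Y0.
set a := Num.sqrt L2 in a0 ea *; set b := Num.sqrt Y2 in b0 eb *.
have c0 : 0 <= 2 * (a + b) by lra.
rewrite -(ger0_norm c0) -sqrtr_sqr ler_sqrt ?sqr_ge0 //.
have := mulr_ge0 a0 b0; rewrite -ea -eb in HD; nra.
Qed.
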